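(* Let $K$ be an algebraically closed field, $m\ge1$ and $2\le a\le b$ integers with $a\ne0$ in $K$, $S=K[[x,y_1,\dots,y_m]]$, $g=g(y_1,\dots,y_m)\in(\underline{y})^b\setminus(\underline{y})^{b+1}$, $A=S/(x^a-g)$, $Q=(y_1,\dots,y_m)A$. Let $d=\gcd(a,b)$, $a'=a/d$, $b'=b/d$, $n_k=\lfloor kb/a\rfloor$ ($1\le k\le a-1$), and define for $n\ge1$ \[I_n=\big(x^ky_1^{i_1}\cdots y_m^{i_m} : k,i_j\in\mathbb{Z}_{\ge0},\ kb'+(i_1+\cdots+i_m)a'\ge n\big)A,\quad J_n=Q^n+\sum_{k=1}^{a-1}x^kQ^{n-n_k},\] and $I_n=A$ for $n\le0$; let $\mathcal{I}=\{I_n\}_{n\in\mathbb{Z}}$ and $G(\mathcal{I})=\bigoplus_{n\ge0}I_n/I_{n+1}$. Then (a) $G(\mathcal{I})$ is reduced; (b) $\overline{I_n}=I_n$ for every $n\ge1$; (c) $\overline{J_n}=J_n$ for every $n\ge1$.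
   Context: $(\underline{y})=(y_1,\dots,y_m)$; $\overline{J}$ denotes integral closure; $Q^j=A$ for $j\le0$. *)

(* Defs.v *)
From mathcomp Require Import all_boot all_order all_algebra.
Set Implicit Arguments. Unset Strict Implicit. Unset Printing Implicit Defensive.
Import Order.TTheory GRing.Theory Num.Theory.
Local Open Scope ring_scope.

Section PS.
Variables (K : fieldType) (N : nat).

Definition mon := {ffun 'I_N -> nat}.
Definition ps := mon -> K.

Definition ps_zero : ps := fun _ => 0.
Definition ps_one : ps := fun e => (e == [ffun=> 0%N])%:R.
Definition ps_add (f h : ps) : ps := fun e => f e + h e.
Definition ps_opp (f : ps) : ps := fun e => - f e.
Definition ps_sub (f h : ps) : ps := ps_add f (ps_opp h).
(* Cauchy product: coefficient at e is sum over e1 <= e of f(e1) h(e - e1);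
   every e1 <= e is encoded exactly once by v with values < (max e) + 1. *)
Definition ps_mul (f h : ps) : ps := fun e =>
  \sum_(v : {ffun 'I_N -> 'I_(\max_(i < N) e i).+1} | [forall i, (v i <= e i)%N])
     f [ffun i => nat_of_ord (v i)] * h [ffun i => (e i - v i)%N].
Definition ps_exp (f : ps) (k : nat) : ps := iter k (ps_mul f) ps_one.
Definition ps_sum (s : seq ps) : ps := foldr ps_add ps_zero s.
Definition ps_mon (e : mon) : ps := fun e' => (e' == e)%:R.
Definition ps_var (i : 'I_N) : ps := ps_mon [ffun j => (j == i : nat)].

Inductive ideal_gen (G : ps -> Prop) : ps -> Prop :=
| ig_zero : ideal_gen G ps_zero
| ig_step s g r : G g -> ideal_gen G r -> ideal_gen G (ps_add (ps_mul s g) r).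

Definition ideal_add (I J : ps -> Prop) : ps -> Prop :=
  ideal_gen (fun r => I r \/ J r).
Definition ideal_mul (I J : ps -> Prop) : ps -> Prop :=
  ideal_gen (fun r => exists u v, I u /\ J v /\ r = ps_mul u v).
Fixpoint ideal_pow (I : ps -> Prop) (n : nat) : ps -> Prop :=
  match n with
  | 0%N => fun _ => True
  | n'.+1 => ideal_mul (ideal_pow I n') I
  end.

(* Working in a quotient A = S/F: an ideal of A is represented by its
   preimage in S (an ideal of S containing F). *)
Variable F : ps -> Prop.
Definition qpow (I : ps -> Prop) (n : nat) : ps -> Prop :=
  ideal_add (ideal_pow I n) F.
(* preimage of the integral closure in A of the ideal I A :
   r^k + c_1 r^(k-1) + ... + c_k = 0 in A with c_i in (IA)^i *)
Definition qclosure (I : ps -> Prop) : ps -> Prop := fun r =>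
  exists (k : nat) (c : nat -> ps), (1 <= k)%N /\
    (forall i, (1 <= i <= k)%N -> qpow I i (c i)) /\
    F (ps_add (ps_exp r k)
              (ps_sum [seq ps_mul (c i) (ps_exp r (k - i)) | i <- iota 1 k])).

(* G(I) = (+)_{n>=0} I_n/I_{n+1}, for a filtration given by preimages In n.
   An element is represented by a family r with r n in In n and
   r n in In (n+1) for n large; components are classes mod In (n+1). *)
Definition gr_mul (r s : nat -> ps) : nat -> ps := fun n =>
  ps_sum [seq ps_mul (r i) (s (n - i)%N) | i <- iota 0 n.+1].
Definition gr_pow (r : nat -> ps) (k : nat) : nat -> ps :=
  iter k.-1 (gr_mul r) r.
Definition gr_reduced (In : nat -> ps -> Prop) : Prop :=
  forall r : nat -> ps,
    (forall n, In n (r n)) ->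
    (exists D, forall n, (D < n)%N -> In n.+1 (r n)) ->
    forall k, (1 <= k)%N ->
      (forall n, In n.+1 (gr_pow r k n)) ->  (* r^k = 0 in G(I) *)
      forall n, In n.+1 (r n).               (* r = 0 in G(I) *)
End PS.

Section Data.
Variables (K : fieldType) (m a b : nat) (g : ps K m.+1).

Definition xv : ps K m.+1 := @ps_var K m.+1 ord0.
Definition yv (i : 'I_m) : ps K m.+1 := @ps_var K m.+1 (lift ord0 i).
Definition Yid : ps K m.+1 -> Prop := ideal_gen (fun r => exists i, r = yv i).
Definition fA : ps K m.+1 := ps_sub (ps_exp xv a) g.
Definition Fid : ps K m.+1 -> Prop := ideal_gen (fun r => r = fA).

Definition dd := gcdn a b.
Definition a' := (a %/ dd)%N.
Definition b' := (b %/ dd)%N.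
Definition nk (k : nat) := (k * b %/ a)%N.

(* preimage in S of I_n ; for n = 0 this is all of A *)
Definition In (n : nat) : ps K m.+1 -> Prop :=
  ideal_gen (fun r => Fid r \/ exists e : mon m.+1,
     (n <= e ord0 * b' + (\sum_(i < m) e (lift ord0 i)) * a')%N /\ r = @ps_mon K m.+1 e).
Definition Qp (j : nat) : ps K m.+1 -> Prop := qpow Fid Yid j.
(* preimage in S of J_n = Q^n + sum_{k=1}^{a-1} x^k Q^{n - n_k}
   (n - n_k truncated at 0, matching Q^j = A for j <= 0) *)
Definition Jn (n : nat) : ps K m.+1 -> Prop :=
  ideal_gen (fun r => Fid r \/ Qp n r \/
    exists k q, (1 <= k <= a - 1)%N /\ Qp (n - nk k) q /\
                r = ps_mul (ps_exp xv k) q).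
End Data.

(* Main.v *)
Require Import Defs.
From HB Require Import structures.
From mathcomp Require Import all_boot all_order all_algebra all_field.
From mathcomp Require Import boolp.
From mathcomp Require Import zify ring.
From mathcomp.multinomials Require Import mpoly.
Set Implicit Arguments. Unset Strict Implicit. Unset Printing Implicit Defensive.
Import Order.TTheory GRing.Theory.
Local Open Scope ring_scope.

Section Conv.
Variables (K : fieldType) (N : nat).
Local Notation mon := (mon N).
Local Notation ps := (ps K N).

Definition madd (u v : mon) : mon := [ffun i => (u i + v i)%N].
Definition msub (u v : mon) : mon := [ffun i => (u i - v i)%N].
Definition mle (u v : mon) : bool := [forall i, (u i <= v i)%N].

Definition bnd (e : mon) := (\max_(i < N) e i).+1.
Definition tom (e : mon) (v : {ffun 'I_N -> 'I_(bnd e)}) : mon :=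
  [ffun i => nat_of_ord (v i)].
Definition box (e : mon) : seq mon :=
  image (@tom e) [pred v : {ffun 'I_N -> 'I_(bnd e)} | [forall i, (v i <= e i)%N]].

Lemma tom_inj e : injective (@tom e).
Proof.
move=> v w H; apply/ffunP=> i; apply: val_inj.
by have := congr1 (fun u : mon => u i) H; rewrite /tom !ffunE.
Qed.

Lemma box_uniq e : uniq (box e).
Proof. by rewrite /box /image_mem map_inj_uniq ?enum_uniq //; apply: tom_inj. Qed.

Lemma mleP (u v : mon) : reflect (forall i, (u i <= v i)%N) (mle u v).
Proof. exact: forallP. Qed.

Lemma mem_box e u : (u \in box e) = mle u e.
Proof.
apply/idP/idP.
  case/imageP=> v; rewrite inE => /forallP Hv ->.
  by apply/mleP=> i; rewrite /tom ffunE.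
move/mleP=> Hu.
have Hb : forall i, (u i < bnd e)%N.
  move=> i; rewrite /bnd ltnS; apply: leq_trans (Hu i) _.
  exact: (leq_bigmax (F := fun i => e i) i).
apply/imageP; exists [ffun i => Ordinal (Hb i)].
  by rewrite inE; apply/forallP=> i; rewrite ffunE /=.
by apply/ffunP=> i; rewrite /tom !ffunE.
Qed.

Lemma ps_mul_box (f h : ps) e :
  ps_mul f h e = \sum_(u <- box e) f u * h (msub e u).
Proof.
rewrite /box big_image /ps_mul; apply: eq_bigr => v _.
congr (_ * h _); apply/ffunP=> i; by rewrite /msub /tom !ffunE.
Qed.

Lemma ps_mul_seq (f h : ps) e (t : seq mon) :
  uniq t -> (forall u, (u \in t) = mle u e) ->
  ps_mul f h e = \sum_(u <- t) f u * h (msub e u).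
Proof.
move=> Ut Ht; rewrite ps_mul_box; apply: perm_big.
apply: uniq_perm; rewrite ?box_uniq //.
by move=> u; rewrite mem_box Ht.
Qed.


Lemma mon_eq (u v : mon) : (forall i, u i = v i) -> u = v.
Proof. by move=> H; apply/ffunP. Qed.

Lemma mle_refl u : mle u u. Proof. by apply/mleP. Qed.
Lemma mle_trans u v w : mle u v -> mle v w -> mle u w.
Proof. move=> /mleP H1 /mleP H2; apply/mleP=> i; exact: leq_trans (H1 i) (H2 i). Qed.
Lemma mle_sub e u : mle (msub e u) e.
Proof. by apply/mleP=> i; rewrite ffunE leq_subr. Qed.
Lemma msubK e u : mle u e -> msub e (msub e u) = u.
Proof. move/mleP=> H; apply: mon_eq=> i; rewrite !ffunE; have := H i; lia. Qed.

Lemma ps_mulC (f h : ps) : ps_mul f h = ps_mul h f.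
Proof.
apply: funext=> e; rewrite ps_mul_box (ps_mul_seq _ _ (t := map (msub e) (box e))).
- rewrite [RHS]big_map; apply: eq_big_seq=> u; rewrite mem_box=> Hu.
  by rewrite msubK // mulrC.
- rewrite map_inj_in_uniq ?box_uniq // => u v; rewrite !mem_box=> Hu Hv H.
  by rewrite -(msubK Hu) H msubK.
move=> u; apply/mapP/idP.
  by case=> v _ ->; apply: mle_sub.
by move=> Hu; exists (msub e u); rewrite ?mem_box ?mle_sub // msubK.
Qed.

Lemma ps_mulDl (f g h : ps) : ps_mul (ps_add f g) h = ps_add (ps_mul f h) (ps_mul g h).
Proof.
apply: funext=> e; rewrite /ps_add !ps_mul_box -big_split /=.
by apply: eq_bigr=> u _; rewrite mulrDl.
Qed.

Definition mzero : mon := [ffun=> 0%N].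

Lemma ps_mul1 (h : ps) : ps_mul (@ps_one K N) h = h.
Proof.
apply: funext=> e; rewrite ps_mul_box (bigD1_seq mzero) ?box_uniq //=; last first.
  by rewrite mem_box; apply/mleP=> i; rewrite ffunE.
rewrite /ps_one eqxx mul1r big1_seq ?addr0.
  by congr h; apply: mon_eq=> i; rewrite ffunE /mzero ffunE subn0.
by move=> u /andP[Hu _]; rewrite (negbTE Hu) mul0r.
Qed.

Lemma ps_mulA (f g h : ps) : ps_mul f (ps_mul g h) = ps_mul (ps_mul f g) h.
Proof.
apply: funext=> e; rewrite !ps_mul_box.
have E1 : forall u, u \in box e -> f u * ps_mul g h (msub e u) =
   \sum_(v <- box e) (if mle u v then f u * (g (msub v u) * h (msub e v)) else 0).
  move=> u; rewrite mem_box=> /mleP Hu.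
  rewrite (ps_mul_seq _ _ (t := map (fun v => msub v u) [seq v <- box e | mle u v])).
  - rewrite mulr_sumr (big_map (fun v => msub v u)) big_filter [LHS]big_mkcond; apply: eq_big_seq=> v.
    rewrite mem_box=> /mleP Hv; case: ifP=> // /mleP Huv; congr (_ * (_ * h _)).
    apply: mon_eq=> i; rewrite !ffunE; have := Hu i; have := Hv i; have := Huv i; lia.
  - rewrite map_inj_in_uniq ?filter_uniq ?box_uniq // => v w.
    rewrite !mem_filter=> /andP[/mleP H1 _] /andP[/mleP H2 _] H.
    apply: mon_eq=> i; have := congr1 (fun z : mon => z i) H; rewrite /= !ffunE.
    have := H1 i; have := H2 i; lia.
  move=> w; apply/mapP/idP.
    case=> v; rewrite mem_filter mem_box=> /andP[/mleP H1 /mleP H2] ->.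
    apply/mleP=> i; rewrite !ffunE; have := H1 i; have := H2 i; lia.
  move/mleP=> Hw; exists (madd u w).
    rewrite mem_filter mem_box; apply/andP; split; apply/mleP=> i; rewrite !ffunE;
    have := Hu i; have := Hw i; rewrite ?ffunE; lia.
  by apply: mon_eq=> i; rewrite !ffunE; lia.
have E2 : forall v, v \in box e -> ps_mul f g v * h (msub e v) =
   \sum_(u <- box e) (if mle u v then f u * (g (msub v u) * h (msub e v)) else 0).
  move=> v; rewrite mem_box=> /mleP Hv.
  rewrite (ps_mul_seq _ _ (t := [seq u <- box e | mle u v])).
  - rewrite big_filter big_mkcond mulr_suml; apply: eq_bigr=> u _.
    by case: ifP=> _; rewrite ?mul0r ?mulrA.
  - by rewrite filter_uniq ?box_uniq.
  move=> u; rewrite mem_filter mem_box; apply/andP/idP; first by case.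
  move=> Huv; split=> //; apply: mle_trans Huv _; exact/mleP.
rewrite (eq_big_seq _ E1) (eq_big_seq _ E2); exact: exchange_big.
Qed.

Lemma ps_one_neq0 : @ps_one K N != @ps_zero K N.
Proof.
apply/eqP=> H; have := congr1 (fun f : ps => f mzero) H.
by rewrite /ps_one /ps_zero eqxx /= => /eqP; rewrite oner_eq0.
Qed.


Lemma ps_addA : associative (@ps_add K N).
Proof. by move=> f g h; apply: funext=> e; rewrite /ps_add addrA. Qed.
Lemma ps_addC : commutative (@ps_add K N).
Proof. by move=> f g; apply: funext=> e; rewrite /ps_add addrC. Qed.
Lemma ps_add0 : left_id (@ps_zero K N) (@ps_add K N).
Proof. by move=> f; apply: funext=> e; rewrite /ps_add /ps_zero add0r. Qed.
Lemma ps_addN : left_inverse (@ps_zero K N) (@ps_opp K N) (@ps_add K N).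
Proof. by move=> f; apply: funext=> e; rewrite /ps_add /ps_opp /ps_zero addNr. Qed.
End Conv.

HB.instance Definition _ (K : fieldType) (N : nat) := gen_eqMixin (ps K N).
HB.instance Definition _ (K : fieldType) (N : nat) := gen_choiceMixin (ps K N).
HB.instance Definition _ (K : fieldType) (N : nat) :=
  GRing.isZmodule.Build (ps K N) (@ps_addA K N) (@ps_addC K N) (@ps_add0 K N) (@ps_addN K N).

HB.instance Definition _ (K : fieldType) (N : nat) :=
  GRing.Zmodule_isComNzRing.Build (ps K N) (@ps_mulA K N) (@ps_mulC K N)
    (@ps_mul1 K N) (@ps_mulDl K N) (@ps_one_neq0 K N).

Section PsRing.
Variables (K : fieldType) (N : nat).
Local Notation ps := (ps K N).
Lemma ps_addE (f h : ps) : ps_add f h = f + h. Proof. by []. Qed.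
Lemma ps_mulE (f h : ps) : ps_mul f h = f * h. Proof. by []. Qed.
Lemma ps_oneE : @ps_one K N = 1. Proof. by []. Qed.
Lemma ps_zeroE : @ps_zero K N = 0. Proof. by []. Qed.
Lemma ps_oppE (f : ps) : ps_opp f = - f. Proof. by []. Qed.
Lemma ps_subE (f h : ps) : ps_sub f h = f - h. Proof. by []. Qed.
Lemma ps_expE (f : ps) k : ps_exp f k = f ^+ k.
Proof. by elim: k=> [|k IH] //=; rewrite /ps_exp /= -/(ps_exp f k) IH exprS. Qed.
Lemma ps_sumE (s : seq ps) : ps_sum s = \sum_(x <- s) x.
Proof. by elim: s=> [|x s IH]; rewrite ?big_nil ?big_cons //= -IH. Qed.
Lemma addpsE (f h : ps) e : (f + h) e = f e + h e. Proof. by []. Qed.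
Lemma opppsE (f : ps) e : (- f) e = - f e. Proof. by []. Qed.
Lemma zeropsE e : (0 : ps) e = 0. Proof. by []. Qed.
Lemma sumpsE I (r : seq I) (P : pred I) (F : I -> ps) e :
  (\sum_(i <- r | P i) F i) e = \sum_(i <- r | P i) F i e.
Proof.
elim: r=> [|x r IH]; rewrite ?big_nil ?big_cons //.
by case: (P x); rewrite ?addpsE IH.
Qed.
Lemma mulpsE (f h : ps) e : (f * h) e = \sum_(u <- box e) f u * h (msub e u).
Proof. exact: ps_mul_box. Qed.
End PsRing.

Section Mon.
Variables (K : fieldType) (N : nat).
Local Notation mon := (mon N).
Local Notation ps := (ps K N).

Lemma ps_monE (g e : mon) : @ps_mon K N g e = (e == g)%:R.
Proof. by []. Qed.

Lemma mon_mulE (g : mon) (t : ps) e :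
  (@ps_mon K N g * t) e = if mle g e then t (msub e g) else 0.
Proof.
rewrite mulpsE; case: ifP=> Hg.
  rewrite (bigD1_seq g) ?mem_box ?box_uniq //= ps_monE eqxx mul1r big1_seq ?addr0 //.
  by move=> u /andP[Hu _]; rewrite ps_monE (negbTE Hu) mul0r.
apply: big1_seq=> u Hu; rewrite ps_monE; case: eqP=> [E|]; last by rewrite mul0r.
by move: Hu; rewrite E mem_box Hg.
Qed.

Lemma mon_mul (u v : mon) : @ps_mon K N u * @ps_mon K N v = @ps_mon K N (madd u v).
Proof.
apply: funext=> e; rewrite mon_mulE !ps_monE; case: ifP=> /mleP H.
  suff -> : (msub e u == v) = (e == madd u v) by [].
  apply/eqP/eqP=> [E|->].
    apply: mon_eq=> i; have := congr1 (fun z : mon => z i) E; rewrite !ffunE.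
    have := H i; lia.
  by apply: mon_eq=> i; rewrite !ffunE; lia.
case: eqP=> // E; case: H=> i; rewrite E !ffunE; lia.
Qed.

Lemma mon0 : @ps_mon K N (mzero N) = 1.
Proof. by []. Qed.

Definition lin (c : 'I_N -> nat) (e : mon) : nat := (\sum_(i < N) c i * e i)%N.

Lemma lin_add c u v : lin c (madd u v) = (lin c u + lin c v)%N.
Proof. rewrite /lin -big_split /=; apply: eq_bigr=> i _; rewrite ffunE; lia. Qed.

Lemma lin_sub c e u : mle u e -> lin c (msub e u) = (lin c e - lin c u)%N.
Proof.
move/mleP=> H; have -> : e = madd u (msub e u).
  by apply: mon_eq=> i; rewrite !ffunE; have := H i; lia.
rewrite lin_add; have -> : msub (madd u (msub e u)) u = msub e u.
  by apply: mon_eq=> i; rewrite !ffunE; have := H i; lia.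
lia.
Qed.

Lemma lin_le c u e : mle u e -> (lin c u <= lin c e)%N.
Proof. move/mleP=> H; apply: leq_sum=> i _; apply: leq_mul=> //. Qed.

Definition Msupp c n (s : ps) := forall e, s e != 0 -> (n <= lin c e)%N.

Lemma Msupp0 c n : Msupp c n 0.
Proof. by move=> e; rewrite zeropsE eqxx. Qed.
Lemma MsuppD c n s t : Msupp c n s -> Msupp c n t -> Msupp c n (s + t).
Proof.
move=> Hs Ht e; rewrite addpsE; case: (eqVneq (s e) 0)=> [->|/Hs //].
by rewrite add0r; apply: Ht.
Qed.
Lemma MsuppN c n s : Msupp c n s -> Msupp c n (- s).
Proof. by move=> Hs e; rewrite opppsE oppr_eq0; apply: Hs. Qed.
Lemma MsuppB c n s t : Msupp c n s -> Msupp c n t -> Msupp c n (s - t).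
Proof. by move=> Hs Ht; apply: MsuppD=> //; apply: MsuppN. Qed.
Lemma Msupp_le c n n' s : (n' <= n)%N -> Msupp c n s -> Msupp c n' s.
Proof. by move=> H Hs e /Hs; apply: leq_trans. Qed.
Lemma Msupp_mon c g : Msupp c (lin c g) (@ps_mon K N g).
Proof. by move=> e; rewrite ps_monE; case: (eqVneq e g)=> [->|]; rewrite ?eqxx. Qed.
Lemma MsuppM c n n' s t : Msupp c n s -> Msupp c n' t -> Msupp c (n + n')%N (s * t).
Proof.
move=> Hs Ht e; apply: contraR; rewrite -ltnNge=> He.
rewrite mulpsE big1_seq // => u; rewrite mem_box=> Hu.
case: (eqVneq (s u) 0)=> [->|/Hs H1]; first by rewrite mul0r.
case: (eqVneq (t (msub e u)) 0)=> [->|/Ht H2]; first by rewrite mulr0.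
move: H2; rewrite lin_sub //; have := lin_le c Hu; lia.
Qed.
Lemma MsuppMl c n s t : Msupp c n t -> Msupp c n (s * t).
Proof. by move=> Ht; rewrite -(add0n n); apply: MsuppM=> // e. Qed.
Lemma Msupp_sum c n I (r : seq I) (P : pred I) (F : I -> ps) :
  (forall i, P i -> Msupp c n (F i)) -> Msupp c n (\sum_(i <- r | P i) F i).
Proof.
move=> H; elim: r=> [|x r IH]; rewrite ?big_nil ?big_cons; first exact: Msupp0.
by case: ifP=> // Px; apply: MsuppD=> //; apply: H.
Qed.

Definition comp c w (s : ps) : ps := fun e => if lin c e == w then s e else 0.

Lemma compD c w s t : comp c w (s + t) = comp c w s + comp c w t.
Proof. by apply: funext=> e; rewrite !addpsE /comp /=; case: ifP; rewrite ?addr0. Qed.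
Lemma compN c w s : comp c w (- s) = - comp c w s.
Proof. by apply: funext=> e; rewrite !opppsE /comp /=; case: ifP; rewrite ?oppr0. Qed.
Lemma compB c w s t : comp c w (s - t) = comp c w s - comp c w t.
Proof. by rewrite compD compN. Qed.
Lemma comp0 c w : comp c w 0 = 0.
Proof. by apply: funext=> e; rewrite /comp; case: ifP. Qed.
Lemma comp_Msupp c w s : Msupp c (w.+1) s -> comp c w s = 0.
Proof.
move=> H; apply: funext=> e; rewrite /comp; case: eqP=> // E.
by apply/eqP; apply: contraT=> /H; rewrite E ltnn.
Qed.
Lemma Msupp_comp c w s : Msupp c w (comp c w s).
Proof. by move=> e; rewrite /comp; case: (eqVneq (lin c e) w)=> [->|]; rewrite ?eqxx. Qed.
Lemma Msupp_sub_comp c w s : Msupp c w s -> Msupp c w.+1 (s - comp c w s).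
Proof.
move=> H e; rewrite addpsE opppsE /comp; case: (eqVneq (lin c e) w)=> [_|E].
  by rewrite subrr eqxx.
by rewrite subr0=> /H; rewrite leq_eqVlt eq_sym (negbTE E).
Qed.

Lemma compM c n n' s t : Msupp c n s -> Msupp c n' t ->
  comp c (n + n')%N (s * t) = comp c n s * comp c n' t.
Proof.
move=> Hs Ht; apply: funext=> e; rewrite mulpsE /comp mulpsE.
case: eqP=> [E|E].
  apply: eq_big_seq=> u; rewrite mem_box=> Hu; rewrite lin_sub //.
  case: (eqVneq (s u) 0)=> [->|/Hs H1]; first by rewrite mul0r; case: ifP; rewrite ?mul0r.
  case: (eqVneq (t (msub e u)) 0)=> [->|H2]; first by rewrite mulr0; case: ifP; case: ifP; rewrite ?mulr0 ?mul0r.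
  move: (Ht _ H2); rewrite lin_sub // => H3.
  have := lin_le c Hu=> H4.
  have -> : lin c u == n by apply/eqP; lia.
  have -> : (lin c e - lin c u == n')%N by apply/eqP; lia.
  by [].
rewrite big1_seq // => u; rewrite mem_box=> Hu; rewrite lin_sub //.
have := lin_le c Hu=> H4.
case: eqP=> E1; last by rewrite mul0r.
case: eqP=> E2; last by rewrite mulr0.
by case: E; lia.
Qed.

Definition is_ideal (P : ps -> Prop) :=
  [/\ P 0, forall x y, P x -> P y -> P (x + y) & forall s x, P x -> P (s * x)].

Lemma gen_ideal (G : ps -> Prop) : is_ideal (ideal_gen G).
Proof.
split; first exact: ig_zero.
  move=> x y; elim=> [|s g r Gg _ IH] Hy; first by rewrite ps_zeroE add0r.
  by rewrite !ps_addE -addrA; apply: ig_step=> //; apply: IH.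
move=> s x; elim=> [|t g r Gg _ IH].
  by rewrite ps_zeroE mulr0; apply: ig_zero.
by rewrite !ps_addE !ps_mulE mulrDr mulrA; apply: ig_step.
Qed.

Lemma gen_in (G : ps -> Prop) x : G x -> ideal_gen G x.
Proof.
move=> Gx; have -> : x = ps_add (ps_mul 1 x) 0 by rewrite ps_addE ps_mulE mul1r addr0.
by apply: ig_step=> //; apply: ig_zero.
Qed.

Lemma gen_min (G P : ps -> Prop) : is_ideal P -> (forall x, G x -> P x) ->
  forall x, ideal_gen G x -> P x.
Proof.
case=> P0 PD PM HG x; elim=> [|s g r Gg _ IH]; first exact: P0.
by apply: PD=> //; apply: PM; apply: HG.
Qed.

Section IdealFacts.
Variable P : ps -> Prop.
Hypothesis HP : is_ideal P.
Lemma idl0 : P 0. Proof. by case: HP. Qed.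
Lemma idlD x y : P x -> P y -> P (x + y). Proof. by case: HP=> _ H _; apply: H. Qed.
Lemma idlM s x : P x -> P (s * x). Proof. by case: HP=> _ _ H; apply: H. Qed.
Lemma idlMr s x : P x -> P (x * s). Proof. by rewrite mulrC; apply: idlM. Qed.
Lemma idlN x : P x -> P (- x).
Proof. by move=> Px; rewrite -mulN1r; apply: idlM. Qed.
Lemma idlB x y : P x -> P y -> P (x - y).
Proof. by move=> Px Py; apply: idlD=> //; apply: idlN. Qed.
Lemma idl_sum I (r : seq I) (Q : pred I) (F : I -> ps) :
  (forall i, Q i -> P (F i)) -> P (\sum_(i <- r | Q i) F i).
Proof.
move=> H; elim: r=> [|x r IH]; rewrite ?big_nil ?big_cons; first exact: idl0.
by case: ifP=> // Qx; apply: idlD=> //; apply: H.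
Qed.
Lemma idl_eq x y : P x -> P (y - x) -> P y.
Proof. by move=> Px Pyx; rewrite -(subrK x y); apply: idlD. Qed.
End IdealFacts.

Lemma True_ideal : is_ideal (fun _ : ps => True). Proof. by []. Qed.

Lemma pow_ideal (I : ps -> Prop) n : is_ideal (ideal_pow I n).
Proof. case: n=> [|n] /=; [exact: True_ideal | exact: gen_ideal]. Qed.

Lemma pow_mul (I : ps -> Prop) p q x y :
  ideal_pow I p x -> ideal_pow I q y -> ideal_pow I (p + q)%N (x * y).
Proof.
elim: q y=> [|q IH] y Hx Hy; first by rewrite addn0; apply: idlMr=> //; apply: pow_ideal.
rewrite addnS /=; move: y Hy; apply: gen_min.
  split; first by rewrite mulr0; apply: ig_zero.
    by move=> u v Hu Hv; rewrite mulrDr; apply: idlD=> //; apply: gen_ideal.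
  by move=> s u Hu; rewrite mulrCA; apply: idlM=> //; apply: gen_ideal.
move=> z [u [v [Hu [Iv ->]]]]; apply: gen_in; exists (x * u), v; split=> //.
  exact: IH.
by split=> //; rewrite ps_mulE ps_mulE mulrA.
Qed.

Lemma pow_mono (I : ps -> Prop) p q x : (q <= p)%N -> ideal_pow I p x -> ideal_pow I q x.
Proof.
move=> H; rewrite -(subnK H); elim: (p - q)%N x=> [|k IH] x //=.
move=> Hx; apply: IH; move: x Hx; apply: gen_min; first exact: pow_ideal.
by move=> z [u [v [Hu [_ ->]]]]; rewrite ps_mulE mulrC; apply: idlM=> //; apply: pow_ideal.
Qed.

Lemma pow_sub (I : ps -> Prop) (Pf : nat -> ps -> Prop) n :
  (forall k, is_ideal (Pf k)) -> (forall x, Pf 0%N x) ->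
  (forall k l x y, Pf k x -> Pf l y -> Pf (k + l)%N (x * y)) ->
  (forall x, I x -> Pf n x) ->
  forall i x, ideal_pow I i x -> Pf (n * i)%N x.
Proof.
move=> Hid H0 HM HI; elim=> [|i IH] x /=; first by rewrite muln0.
apply: gen_min=> // z [u [v [Hu [Iv ->]]]].
by rewrite mulnS addnC; apply: HM; [apply: IH | apply: HI].
Qed.


Lemma Msupp_ideal c n : is_ideal (Msupp c n).
Proof. split; [exact: Msupp0 | exact: MsuppD | move=> s x; exact: MsuppMl]. Qed.

Definition trunc B (e : mon) : mon := [ffun i => minn (e i) B].
Definition tomb B (v : {ffun 'I_N -> 'I_B.+1}) : mon := [ffun i => nat_of_ord (v i)].

Lemma mon_mulE' (g : mon) (t : ps) e :
  (t * @ps_mon K N g) e = if mle g e then t (msub e g) else 0.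
Proof. by rewrite mulrC mon_mulE. Qed.

Lemma decomp (P : ps -> Prop) (ok : pred mon) B :
  is_ideal P -> (forall e, ok e -> ok (trunc B e)) ->
  (forall g, ok g -> P (@ps_mon K N g)) ->
  forall s : ps, (forall e, s e != 0 -> ok e) -> P s.
Proof.
move=> HP Htr Hg.
have claim : forall L : seq mon, all ok L -> forall s : ps,
    (forall e, s e != 0 -> has (fun g => mle g e) L) -> P s.
  elim=> [|g L IH] /=.
    move=> _ s Hs; have -> : s = 0.
      by apply: funext=> e; apply/eqP; apply: contraT=> /Hs.
    exact: idl0.
  case/andP=> okg okL s Hs.
  pose s1 : ps := fun e' => s (madd g e').
  pose s2 : ps := fun e => if mle g e then 0 else s e.
  have -> : s = @ps_mon K N g * s1 + s2.
    apply: funext=> e; rewrite addpsE mon_mulE /s1 /s2; case: ifP=> H.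
      rewrite addr0; congr s; apply: mon_eq=> i; rewrite !ffunE.
      by move/mleP: H=> H; have := H i; lia.
    by rewrite add0r.
  apply: idlD=> //; first by apply: (idlMr HP); apply: Hg.
  apply: IH=> // e; rewrite /s2; case: ifP=> [_|H]; first by rewrite eqxx.
  by move/Hs; rewrite H.
move=> s Hs; apply: (claim (filter ok (map (@tomb B) (enum {ffun 'I_N -> 'I_B.+1})))).
  exact: filter_all.
move=> e /Hs oke; apply/hasP; exists (trunc B e).
  rewrite mem_filter Htr //=.
  have Hb : forall i, (minn (e i) B < B.+1)%N by move=> i; rewrite ltnS geq_minr.
  apply/mapP; exists [ffun i => Ordinal (Hb i)]; first by rewrite mem_enum.
  by apply: mon_eq=> i; rewrite !ffunE.
by apply/mleP=> i; rewrite ffunE geq_minl.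
Qed.

Lemma lin_trunc c n e : (n <= lin c e)%N -> (n <= lin c (trunc n e))%N.
Proof.
move=> H; case: (boolP [exists i, (0 < c i)%N && (n <= e i)%N]).
  case/existsP=> i /andP[ci ni].
  rewrite /lin (bigD1 i) //= ffunE; have -> : minn (e i) n = n by apply/minn_idPr.
  apply: leq_trans (leq_addr _ _); rewrite -{1}[n]mul1n; exact: leq_mul.
rewrite negb_exists=> /forallP Hn.
suff -> : lin c (trunc n e) = lin c e by [].
apply: eq_bigr=> i _; rewrite ffunE; have := Hn i; rewrite negb_and -leqNgt -ltnNge.
case/orP=> [c0|lt]; first by rewrite leqn0 in c0; rewrite (eqP c0) !mul0n.
by congr (_ * _)%N; apply/minn_idPl; apply: ltnW.
Qed.

End Mon.

Section SqFree.
Variable L : fieldType.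

Lemma sqfree_dvd (P R : {poly L}) k :
  separable_poly P -> P %| R ^+ k -> P %| R.
Proof.
move=> sP dk.
have P0 : P != 0 by apply: separable_poly_neq0.
set G1 := gcdp P R.
have G1P : G1 %| P by apply: dvdp_gcdl.
set Q := P %/ G1.
have EP : Q * G1 = P by rewrite /Q divpK.
have cQG : coprimep Q G1 by apply: (separable_coprime sP); rewrite EP.
have cQR : coprimep Q R.
  apply/coprimepP=> d dQ dR.
  have dP : d %| P by rewrite -EP dvdp_mulr.
  have dG : d %| G1 by rewrite dvdp_gcd dP.
  by move/coprimepP: cQG; apply.
have Q1 : Q %= 1.
  have cQRk : coprimep Q (R ^+ k) by apply: coprimep_expr.
  move/coprimepP: cQRk; apply=> //.
  by apply: dvdp_trans dk; rewrite -EP dvdp_mulr.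
have : P %= G1.
  by rewrite -EP mulrC; have := eqp_mull G1 Q1; rewrite mulr1.
by move/eqp_dvdl=> ->; apply: dvdp_gcdr.
Qed.

Lemma separable_XnsubC (a : nat) (c : L) : (0 < a)%N -> (a%:R : L) != 0 -> c != 0 ->
  separable_poly ('X^a - c%:P).
Proof.
case: a=> // a _ Ha Hc; rewrite unlock.
pose u := (c^-1)%:P; pose w := ((a.+1%:R : L)^-1)%:P; pose A := (a.+1%:R : {poly L}).
have uC : u * c%:P = 1 by rewrite -polyCM mulVf.
have wA : w * A = 1 by rewrite /A -polyC_natr -polyCM mulVf.
apply/Bezout_eq1_coprimepP; exists (- u, u * w * 'X).
rewrite /= derivB derivC subr0 derivXn /= exprS.
have -> : 'X^a *+ a.+1 = 'X^a * A by rewrite /A mulr_natr.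
have E : - u * ('X * 'X^a - c%:P) + u * w * 'X * ('X^a * A) =
   u * c%:P + u * 'X * 'X^a * (w * A - 1) by ring.
by rewrite E uC wA subrr mulr0 addr0.
Qed.

End SqFree.

Section Quot.
Variable R : idomainType.

Lemma dvd_sqfree (a k : nat) (G : R) (rho H : {poly R}) :
  (0 < a)%N -> (a%:R : R) != 0 -> G != 0 ->
  rho ^+ k = H * ('X^a - G%:P) -> exists Q, rho = Q * ('X^a - G%:P).
Proof.
move=> a0 aR G0 E.
pose P : {poly R} := 'X^a - G%:P.
have mP : P \is monic by apply: monicXnsubC.
pose Q0 : {poly R} := rho %/ P; pose R0 : {poly R} := rho %% P.
have Erho : rho = Q0 * P + R0 by apply: Pdiv.IdomainMonic.divp_eq.
exists Q0.
suff R00 : R0 = 0 by rewrite {1}Erho R00 addr0.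
have EK : R0 ^+ k = (H - Q0 * \sum_(i < k) R0 ^+ (k.-1 - i) * rho ^+ i) * P.
  have : R0 ^+ k - rho ^+ k = (R0 - rho) * \sum_(i < k) R0 ^+ (k.-1 - i) * rho ^+ i.
    exact: subrXX.
  have HR : R0 - rho = - (Q0 * P) by rewrite Erho opprD addrCA subrr addr0.
  move=> E2; rewrite -(subrK (rho ^+ k) (R0 ^+ k)) E2 HR E -/P.
  by rewrite mulrBl mulNr mulrAC addrC.
pose f := map_poly (@tofrac R).
have finj : injective (@tofrac R) by move=> x y /eqP; rewrite tofrac_eq=> /eqP.

have fP : f P = 'X^a - (tofrac G)%:P by rewrite /f rmorphB /= map_polyXn map_polyC.
have sP : separable_poly (f P).
  rewrite fP; apply: separable_XnsubC=> //.
    by rewrite -tofrac1 -tofracMn tofrac_eq.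
  by rewrite tofrac_eq0.
have d1 : f P %| f R0 ^+ k by rewrite /f -rmorphXn EK rmorphM dvdp_mulIr.
have d2 := sqfree_dvd sP d1.
apply/eqP; apply: contraT=> nz.
have nzf : f R0 != 0.
  by apply: contra nz; rewrite /f -size_poly_eq0 size_map_inj_poly ?tofrac0 // size_poly_eq0.
have := dvdp_leq nzf d2.
rewrite /f !size_map_inj_poly ?tofrac0 //.
have := ltn_modpN0 rho (monic_neq0 mP); rewrite -/R0; by move=> h1 h2; move: (leq_ltn_trans h2 h1); rewrite ltnn.
Qed.

End Quot.

Section Psi.
Variables (K : fieldType) (m : nat).
Local Notation mon := (mon m.+1).
Local Notation ps := (ps K m.+1).
Local Notation D := {mpoly K[m]}.

Definition ymon (e : mon) : 'X_{1..m} := [multinom e (lift ord0 i) | i < m].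
Definition mk (j : nat) (al : 'X_{1..m}) : mon :=
  [ffun i => if unlift ord0 i is Some i' then al i' else j].

Lemma mk0 j al : mk j al ord0 = j.
Proof. by rewrite ffunE unlift_none. Qed.
Lemma mkl j al i : mk j al (lift ord0 i) = al i.
Proof. by rewrite ffunE liftK. Qed.
Lemma ymon_mk j al : ymon (mk j al) = al.
Proof. by apply/mnmP=> i; rewrite mnmE mkl. Qed.
Lemma mk_eta (e : mon) : mk (e ord0) (ymon e) = e.
Proof.
apply/ffunP=> i; rewrite ffunE; case: unliftP=> [j Ei|Ei].
  by rewrite Ei mnmE.
by rewrite Ei.
Qed.
Lemma madd_mk j al l be : madd (mk j al) (mk l be) = mk (j + l) (al + be)%MM.
Proof.
apply/ffunP=> i; rewrite !ffunE; case: unliftP=> [i' _|_]; rewrite ?mnmDE //.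
Qed.
Lemma mk_eq (e : mon) j al : (e == mk j al) = (e ord0 == j) && (ymon e == al).
Proof.
apply/eqP/andP=> [->|[/eqP <- /eqP <-]]; last by rewrite mk_eta.
by rewrite mk0 ymon_mk.
Qed.

Definition Psi (p : {poly D}) : ps := fun e => (p`_(e ord0))@_(ymon e).

Lemma PsiD p q : Psi (p + q) = Psi p + Psi q.
Proof. by apply: funext=> e; rewrite /Psi addpsE coefD mcoeffD. Qed.
Lemma Psi0 : Psi 0 = 0.
Proof. by apply: funext=> e; rewrite /Psi coef0 mcoeff0. Qed.
Lemma PsiN p : Psi (- p) = - Psi p.
Proof. by apply: funext=> e; rewrite /Psi opppsE coefN mcoeffN. Qed.
Lemma PsiB p q : Psi (p - q) = Psi p - Psi q.
Proof. by rewrite PsiD PsiN. Qed.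
Lemma Psi_sum I (r : seq I) (P : pred I) (F : I -> {poly D}) :
  Psi (\sum_(i <- r | P i) F i) = \sum_(i <- r | P i) Psi (F i).
Proof. exact: (big_morph Psi PsiD Psi0). Qed.

Definition sc (c : K) (s : ps) : ps := fun e => c * s e.
Lemma sc_mul c c' (s t : ps) : sc c s * sc c' t = sc (c * c') (s * t).
Proof.
apply: funext=> e; rewrite /sc !mulpsE mulr_sumr; apply: eq_bigr=> u _.
by rewrite mulrACA.
Qed.

Definition T (c : K) (al : 'X_{1..m}) (j : nat) : {poly D} := (c *: 'X_[al])%:P * 'X^j.

Lemma PsiT c al j : Psi (T c al j) = sc c (@ps_mon K m.+1 (mk j al)).
Proof.
apply: funext=> e; rewrite /Psi /sc /T coefCM coefXn ps_monE mk_eq.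
case: eqP=> _ /=; last by rewrite mulr0 mcoeff0 mulr0.
by rewrite mulr1 mcoeffZ mcoeffX eq_sym.
Qed.

Lemma T_mul c al j c' be l : T c al j * T c' be l = T (c * c') (al + be)%MM (j + l).
Proof.
rewrite /T mulrACA -polyCM exprD; congr (_%:P * _).
by rewrite -scalerAl -scalerAr scalerA mpolyXD.
Qed.

Lemma poly_expand (p : {poly D}) :
  p = \sum_(i < size p) \sum_(al <- msupp p`_i) T (p`_i@_al) al i.
Proof.
rewrite -{1}[p]coefK poly_def; apply: eq_bigr=> i _.
rewrite -mul_polyC {1}[p`_i]mpolyE rmorph_sum mulr_suml /=.
by [].
Qed.

Lemma Psi1 : Psi 1 = 1.
Proof.
have -> : (1 : {poly D}) = T 1 0%MM 0 by rewrite /T scale1r mpolyX0 expr0 mulr1.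
rewrite PsiT; apply: funext=> e; rewrite /sc mul1r.
have -> : mk 0 0%MM = mzero m.+1.
  by apply/ffunP=> i; rewrite !ffunE; case: unlift=> // i'; rewrite mnm0E.
by [].
Qed.

Lemma PsiTM c al i q : Psi (T c al i * q) = Psi (T c al i) * Psi q.
Proof.
rewrite [q]poly_expand.
rewrite mulr_sumr Psi_sum Psi_sum mulr_sumr; apply: eq_bigr=> j _.
rewrite mulr_sumr Psi_sum Psi_sum mulr_sumr; apply: eq_bigr=> be _.
by rewrite T_mul !PsiT sc_mul mon_mul madd_mk.
Qed.

Lemma PsiM p q : Psi (p * q) = Psi p * Psi q.
Proof.
rewrite [p]poly_expand.
rewrite mulr_suml Psi_sum Psi_sum mulr_suml; apply: eq_bigr=> i _.
rewrite mulr_suml Psi_sum Psi_sum mulr_suml; apply: eq_bigr=> al _.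
exact: PsiTM.
Qed.

Lemma PsiX k p : Psi (p ^+ k) = Psi p ^+ k.
Proof. by elim: k=> [|k IH]; rewrite ?expr0 ?Psi1 // !exprS PsiM IH. Qed.

Lemma Psi_inj p : Psi p = 0 -> p = 0.
Proof.
move=> H; apply/polyP=> i; rewrite coef0; apply/mpolyP=> al; rewrite mcoeff0.
have := congr1 (fun f : ps => f (mk i al)) H.
by rewrite /Psi mk0 ymon_mk zeropsE.
Qed.

Lemma Psi_inj2 p q : Psi p = Psi q -> p = q.
Proof. by move=> H; apply/eqP; rewrite -subr_eq0; apply/eqP/Psi_inj; rewrite PsiB H subrr. Qed.

Definition tomB B (v : {ffun 'I_m.+1 -> 'I_B.+1}) : mon := [ffun i => nat_of_ord (v i)].

Lemma Psi_surj (s : ps) B : (forall e, s e != 0 -> forall i, (e i <= B)%N) ->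
  exists p, Psi p = s.
Proof.
move=> Hs.
exists (\sum_(v : {ffun 'I_m.+1 -> 'I_B.+1}) T (s (tomB v)) (ymon (tomB v)) (tomB v ord0)).
rewrite Psi_sum; apply: funext=> e; rewrite sumpsE.
under eq_bigr=> v _ do rewrite PsiT /sc mk_eta ps_monE.
case: (eqVneq (s e) 0)=> [He|/Hs Hb].
  rewrite big1 // => v _; case: eqP=> [E|]; rewrite ?mulr0 //.
  by rewrite mulr1 -E.
have Hb' : forall i, (e i < B.+1)%N by move=> i; rewrite ltnS.
pose v0 : {ffun 'I_m.+1 -> 'I_B.+1} := [ffun i => Ordinal (Hb' i)].
have Ev0 : tomB v0 = e by apply/ffunP=> i; rewrite !ffunE.
rewrite (bigD1 v0) //= Ev0 eqxx mulr1 big1 ?addr0 // => v Hv.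
case: eqP=> [E|]; last by rewrite mulr0.
case/eqP: Hv; apply/ffunP=> i; apply: val_inj.
by have := congr1 (fun z : mon => z i) E; rewrite /= !ffunE.
Qed.

Lemma PsiC (c : D) (e : mon) : Psi c%:P e = if e ord0 == 0%N then c@_(ymon e) else 0.
Proof. by rewrite /Psi coefC; case: eqP; rewrite ?mcoeff0. Qed.

End Psi.

Section Conc.
Variables (K : fieldType) (m a b : nat) (g : ps K m.+1).
Hypothesis ha : (2 <= a)%N.
Hypothesis hab : (a <= b)%N.

Local Notation mon := (mon m.+1).
Local Notation ps := (ps K m.+1).
Local Notation A' := (a' a b).
Local Notation B' := (b' a b).
Local Notation In := (@In K m a b g).
Local Notation Fid := (@Fid K m a g).
Local Notation pmon := (@ps_mon K m.+1).

Definition cw : 'I_m.+1 -> nat := fun i => if i == ord0 then B' else A'.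
Definition cy : 'I_m.+1 -> nat := fun i => if i == ord0 then 0%N else 1%N.
Definition W := (a * B')%N.
Definition dx k : mon := [ffun j => if j == ord0 then k else 0%N].
Definition dy (i : 'I_m) : mon := [ffun j => (j == lift ord0 i : nat)].

Lemma lin_cw (e : mon) : lin cw e = (e ord0 * B' + (\sum_(i < m) e (lift ord0 i)) * A')%N.
Proof.
rewrite /lin big_ord_recl /cw eqxx mulnC big_distrl /=; congr (_ + _)%N.
by apply: eq_bigr=> i _; rewrite mulnC.
Qed.
Lemma lin_cy (e : mon) : lin cy e = (\sum_(i < m) e (lift ord0 i))%N.
Proof.
rewrite /lin big_ord_recl /cy eqxx mul0n add0n.
by apply: eq_bigr=> i _; rewrite mul1n.
Qed.
Lemma lin_cw0 (e : mon) : e ord0 = 0%N -> lin cw e = (lin cy e * A')%N.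
Proof. by move=> H; rewrite lin_cw lin_cy H. Qed.

Lemma d_gt0 : (0 < gcdn a b)%N.
Proof. by rewrite gcdn_gt0; apply/orP; left; lia. Qed.
Lemma aE : a = (A' * gcdn a b)%N.
Proof. by rewrite /a' /dd divnK // dvdn_gcdl. Qed.
Lemma bE : b = (B' * gcdn a b)%N.
Proof. by rewrite /b' /dd divnK // dvdn_gcdr. Qed.
Lemma A'_gt0 : (0 < A')%N.
Proof. have := aE; have := d_gt0; case: (A')=> //; lia. Qed.
Lemma B'_gt0 : (0 < B')%N.
Proof. have := bE; have := d_gt0; case: (B')=> //; lia. Qed.
Lemma WE : W = (b * A')%N.
Proof.
rewrite /W; have := aE; have := bE; have := d_gt0.
set d := gcdn a b; move=> d0 Eb Ea.
apply/eqP; rewrite -(eqn_pmul2r d0); apply/eqP.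
by rewrite -mulnA -bE -mulnA -aE mulnC.
Qed.

Lemma xvE : @xv K m = pmon (dx 1).
Proof.
rewrite /xv /ps_var; congr pmon; apply: mon_eq=> i; rewrite !ffunE.
Qed.
Lemma xvX k : (@xv K m) ^+ k = pmon (dx k).
Proof.
elim: k=> [|k IH]; first by rewrite expr0 -mon0; congr pmon; apply: mon_eq=> i; rewrite !ffunE; case: ifP.
rewrite exprS IH xvE mon_mul; congr pmon; apply: mon_eq=> i; rewrite !ffunE; case: ifP=> //.
Qed.
Lemma lin_dx c k : lin c (dx k) = (c ord0 * k)%N.
Proof.
rewrite /lin (bigD1 ord0) //= big1 ?addn0 ?ffunE ?eqxx // => i Hi.
by rewrite ffunE (negbTE Hi) muln0.
Qed.
Lemma yvE i : @yv K m i = pmon (dy i).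
Proof. by []. Qed.
Lemma lin_dy c i : lin c (dy i) = c (lift ord0 i).
Proof.
rewrite /lin (bigD1 (lift ord0 i)) //= big1 ?addn0 ?ffunE ?eqxx ?muln1 // => j Hj.
by rewrite ffunE (negbTE Hj) muln0.
Qed.

Lemma fAE : @fA K m a g = (@xv K m) ^+ a - g.
Proof. by rewrite /fA ps_subE ps_expE. Qed.

Lemma In_ideal n : is_ideal (In n). Proof. exact: gen_ideal. Qed.
Lemma Fid_ideal : is_ideal Fid. Proof. exact: gen_ideal. Qed.
Lemma Fid_In n r : Fid r -> In n r.
Proof. by move=> H; apply: gen_in; left. Qed.
Lemma mon_In n e : (n <= lin cw e)%N -> In n (pmon e).
Proof. by move=> H; apply: gen_in; right; exists e; rewrite -lin_cw. Qed.
Lemma In_Msupp n s : Msupp cw n s -> In n s.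
Proof.
move=> Hs; apply: (@decomp K m.+1 _ (fun e => n <= lin cw e)%N n).
- exact: In_ideal.
- by move=> e; apply: lin_trunc.
- exact: mon_In.
by move=> e /Hs.
Qed.
Lemma In0 x : In 0 x.
Proof. by apply: In_Msupp=> e. Qed.
Lemma In_mono p q x : (q <= p)%N -> In p x -> In q x.
Proof.
move=> H; apply: gen_min; first exact: In_ideal.
move=> r [/Fid_In //|[e [He ->]]]; apply: mon_In; rewrite lin_cw.
exact: leq_trans He.
Qed.
Lemma Fid_char r : Fid r <-> exists h, r = h * @fA K m a g.
Proof.
split; last by case=> h ->; apply: (idlM Fid_ideal); apply: gen_in.
move=> Fr; apply: (@gen_min K m.+1 _ (fun r => exists h, r = h * @fA K m a g) _ _ r Fr); last first.
  by move=> x ->; exists 1; rewrite mul1r.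
split; first by exists 0; rewrite mul0r.
  by move=> x y [h1 ->] [h2 ->]; exists (h1 + h2); rewrite mulrDl.
by move=> s x [h ->]; exists (s * h); rewrite mulrA.
Qed.
Lemma In_char n r : In n r <-> exists t, Msupp cw n t /\ Fid (r - t).
Proof.
split; last first.
  case=> t [Ht Hr]; apply: (idl_eq (In_ideal n) (x := t)); first exact: In_Msupp.
  exact: Fid_In.
move=> Ir; apply: (@gen_min K m.+1 _ (fun r => exists t, Msupp cw n t /\ Fid (r - t)) _ _ r Ir).
  split; first by exists 0; split; [exact: Msupp0 | rewrite subrr; exact: ig_zero].
    move=> x y [t1 [H1 F1]] [t2 [H2 F2]]; exists (t1 + t2); split; first exact: MsuppD.
    have -> : x + y - (t1 + t2) = (x - t1) + (y - t2) by ring.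
    exact: (idlD Fid_ideal).
  move=> s x [t [H1 F1]]; exists (s * t); split; first exact: MsuppMl.
  by rewrite -mulrBr; apply: (idlM Fid_ideal).
move=> r0 [Fr|[e [He ->]]].
  by exists 0; split; [exact: Msupp0 | rewrite subr0].
exists (pmon e); split; last by rewrite subrr; exact: ig_zero.
by apply: (Msupp_le (n := lin cw e)); [rewrite lin_cw | apply: Msupp_mon].
Qed.
Lemma InM i j x y : In i x -> In j y -> In (i + j)%N (x * y).
Proof.
case/In_char=> t [Ht Ft] /In_char [u [Hu Fu]].
apply/In_char; exists (t * u); split; first exact: MsuppM.
have -> : x * y - t * u = (x - t) * y + t * (y - u) by ring.
by apply: (idlD Fid_ideal); [apply: (idlMr Fid_ideal) | apply: (idlM Fid_ideal)].
Qed.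
Lemma InX n k x : In n x -> In (n * k)%N (x ^+ k).
Proof.
move=> H; elim: k=> [|k IH]; first by rewrite muln0; apply: In0.
by rewrite exprS mulnS; apply: InM.
Qed.

End Conc.

Section Conc2.
Variables (K : fieldType) (m a b : nat) (g : ps K m.+1).
Hypothesis ha : (2 <= a)%N.
Hypothesis hab : (a <= b)%N.
Hypothesis haK : (a%:R : K) != 0.
Hypothesis hgy : forall e : mon m.+1, e ord0 != 0%N -> g e = 0.
Hypothesis hgb : ideal_pow (@Yid K m) b g.
Hypothesis hgb1 : ~ ideal_pow (@Yid K m) b.+1 g.

Local Notation mon := (mon m.+1).
Local Notation ps := (ps K m.+1).
Local Notation A' := (a' a b).
Local Notation B' := (b' a b).
Local Notation In := (@In K m a b g).
Local Notation Fid := (@Fid K m a g).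
Local Notation pmon := (@ps_mon K m.+1).
Local Notation W := (W a b).
Local Notation cw := (cw a b).
Local Notation Yid := (@Yid K m).
Local Notation x := (@xv K m).
Local Notation f := (@fA K m a g).

Lemma Yid_Msupp p s : ideal_pow Yid p s -> Msupp (@cy m) p s.
Proof.
move=> H; rewrite -[p]mul1n; move: H; apply: (@pow_sub K m.+1 Yid (fun k => Msupp (@cy m) k)).
- by move=> k; apply: Msupp_ideal.
- by move=> s' e.
- by move=> k l u v; apply: MsuppM.
move=> y; apply: gen_min; first exact: Msupp_ideal.
by move=> z [i ->]; rewrite yvE; have := @Msupp_mon K m.+1 (@cy m) (dy i); rewrite lin_dy.
Qed.

Lemma Yid1 i : ideal_pow Yid 1 (@yv K m i).
Proof.
rewrite /=; apply: gen_in; exists 1, (@yv K m i); split=> //; split.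
  by apply: gen_in; exists i.
by rewrite ps_mulE mul1r.
Qed.

Lemma ymon_pow k (e : mon) : lin (@cy m) e = k -> ideal_pow Yid k (pmon e).
Proof.
elim: k e=> [|k IH] e He; first by [].
have : exists i, (0 < e (lift ord0 i))%N.
  apply/existsP; apply: contraT; rewrite negb_exists=> /forallP H0.
  move: He; rewrite lin_cy big1 // => i _; have := H0 i; rewrite lt0n negbK=> /eqP.
  by [].
case=> i Hi.
pose e' : mon := msub e (dy i).
have Ee : e = madd (dy i) e'.
  apply: mon_eq=> j; rewrite !ffunE; case: eqP=> [->|]; rewrite /=; lia.
rewrite Ee -mon_mul -yvE -[k.+1]add1n; apply: pow_mul; first exact: Yid1.
apply: IH; move: He; rewrite Ee lin_add lin_dy /cy.
by rewrite eq_sym (negbTE (neq_lift _ _)); lia.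
Qed.

Lemma Msupp_Yid p s : Msupp (@cy m) p s -> ideal_pow Yid p s.
Proof.
move=> Hs; apply: (@decomp K m.+1 _ (fun e => p <= lin (@cy m) e)%N p).
- exact: pow_ideal.
- by move=> e; apply: lin_trunc.
- by move=> e He; apply: (pow_mono He); apply: ymon_pow.
by move=> e /Hs.
Qed.

Lemma g_x (e : mon) : g e != 0 -> e ord0 = 0%N.
Proof. by move=> H; apply/eqP; apply: contraT=> /hgy E; rewrite E eqxx in H. Qed.

Lemma g_Msupp : Msupp cw W g.
Proof.
move=> e He; rewrite lin_cw0 ?g_x // WE //.
by rewrite leq_mul2r (Yid_Msupp hgb He) orbT.
Qed.

Definition gb := comp cw W g.
Definition P0 := x ^+ a - gb.

Lemma comp_mon c w (e : mon) : comp c w (pmon e) = if lin c e == w then pmon e else 0.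
Proof.
apply: funext=> e'; rewrite /comp ps_monE; case: (eqVneq e' e)=> [->|ne].
  by case: (lin c e == w); rewrite ?ps_monE ?eqxx.
by case: (lin c e' == w); case: (lin c e == w); rewrite ?ps_monE ?(negbTE ne).
Qed.

Lemma xa_hom : comp cw W (x ^+ a) = x ^+ a.
Proof. by rewrite xvX comp_mon lin_dx /cw eqxx mulnC eqxx. Qed.
Lemma xa_Msupp : Msupp cw W (x ^+ a).
Proof. by rewrite -xa_hom; apply: Msupp_comp. Qed.

Lemma f_Msupp : Msupp cw W f.
Proof. rewrite fAE; apply: MsuppB; [exact: xa_Msupp | exact: g_Msupp]. Qed.
Lemma f_comp : comp cw W f = P0.
Proof. by rewrite fAE compB xa_hom. Qed.
Lemma P0_Msupp : Msupp cw W P0.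
Proof. rewrite -f_comp; exact: Msupp_comp. Qed.
Lemma P0_comp : comp cw W P0 = P0.
Proof.
by apply: funext=> e; rewrite -f_comp /comp; case: ifP=> // ->.
Qed.
Lemma g_gb : Msupp cw W.+1 (g - gb).
Proof. exact: Msupp_sub_comp g_Msupp. Qed.
Lemma P0E : P0 = f + (g - gb).
Proof. by rewrite /P0 fAE; ring. Qed.

Lemma gb_x (e : mon) : e ord0 != 0%N -> gb e = 0.
Proof. by move=> H; rewrite /gb /comp hgy //; case: ifP. Qed.

Lemma gb_neq0 : gb != 0.
Proof.
apply/eqP=> gb0; apply: hgb1; apply: Msupp_Yid=> e He.
have := g_gb; rewrite gb0 subr0=> /(_ e He).
rewrite lin_cw0 ?g_x // WE //.
rewrite -ltnS -[(b * A').+1]addn1; move=> H.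
have : (b * A' < lin (@cy m) e * A')%N by lia.
by rewrite ltn_mul2r; case/andP.
Qed.

Lemma hom_fin w (s : ps) (e : mon) : comp cw w s e != 0 -> forall i, (e i <= w)%N.
Proof.
rewrite /comp; case: (eqVneq (lin cw e) w)=> [<- _ i|_]; last by rewrite eqxx.
rewrite /lin (bigD1 i) //=; apply: leq_trans (leq_addr _ _).
rewrite -{1}[e i]mul1n leq_mul2r /cw; case: ifP=> _; rewrite ?A'_gt0 ?B'_gt0 //; lia.
Qed.

Lemma exists_Pt : exists G : {mpoly K[m]}, G != 0 /\ Psi ('X^a - G%:P) = P0.
Proof.
have [Gt HG] := Psi_surj (hom_fin (s := g) (w := W)).
exists (Gt`_0).
have EG : Psi (Gt`_0)%:P = gb.
  apply: funext=> e; rewrite PsiC; case: eqP=> [E0|/eqP E0]; last by rewrite gb_x.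
  by rewrite /gb -HG /Psi E0.
split.
  by apply: contra_neq gb_neq0=> G0; rewrite -EG G0 polyC0 Psi0.
rewrite PsiB EG /P0; congr (_ - _).
have -> : ('X^a : {poly {mpoly K[m]}}) = T 1 0%MM a by rewrite /T scale1r mpolyX0 mul1r.
rewrite PsiT xvX; apply: funext=> e; rewrite /sc mul1r; congr (pmon _ e).
by apply/ffunP=> i; rewrite !ffunE; case: unliftP=> [j ->|->]; rewrite ?mnm0E.
Qed.


Lemma fin_preim w (s : ps) : exists p, Psi p = comp cw w s.
Proof. by apply: Psi_surj; apply: hom_fin. Qed.

Lemma P0_mul_neq0 w (s : ps) : comp cw w s != 0 -> comp cw w s * P0 != 0.
Proof.
move=> H; have [G [G0 EP]] := exists_Pt.
have [p Ep] := fin_preim w s.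
have p0 : p != 0 by apply: contra_neq H=> p0; rewrite -Ep p0 Psi0.
have P0t : ('X^a - G%:P : {poly {mpoly K[m]}}) != 0.
  by apply: monic_neq0; apply: monicXnsubC; lia.
rewrite -Ep -EP -PsiM; apply: contra_neq (mulf_neq0 p0 P0t)=> E.
exact: Psi_inj.
Qed.

Lemma P0_dvd w w' (s h : ps) k :
  (comp cw w s) ^+ k = comp cw w' h * P0 -> exists q, comp cw w s = q * P0.
Proof.
move=> E; have [G [G0 EP]] := exists_Pt.
have [p Ep] := fin_preim w s.
have [q Eq] := fin_preim w' h.
have E2 : p ^+ k = q * ('X^a - G%:P).
  by apply: Psi_inj2; rewrite PsiX PsiM Ep Eq EP.
have aR : (a%:R : {mpoly K[m]}) != 0 by rewrite -mpolyC_nat mpolyC_eq0.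
have [Q EQ] := dvd_sqfree (ltnW ha) aR G0 E2.
by exists (Psi Q); rewrite -Ep EQ PsiM EP.
Qed.

Lemma min_weight (phi h : ps) V :
  Msupp cw W phi -> comp cw W phi = P0 -> Msupp cw (V + W)%N (h * phi) -> Msupp cw V h.
Proof.
move=> Hphi Cphi Hh.
suff : forall j, (j <= V)%N -> Msupp cw j h by apply.
elim=> [|j IH] Hj; first by move=> e.
have Hj' := IH (ltnW Hj).
have C0 : comp cw j h = 0.
  apply/eqP; apply: contraT=> /P0_mul_neq0; rewrite -Cphi -compM //.
  rewrite comp_Msupp ?eqxx //; apply: Msupp_le Hh; lia.
by have := Msupp_sub_comp Hj'; rewrite C0 subr0.
Qed.

Lemma MsuppX c n (t : ps) k : Msupp c n t -> Msupp c (n * k)%N (t ^+ k).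
Proof.
move=> H; elim: k=> [|k IH]; first by rewrite muln0=> e.
by rewrite exprS mulnS; apply: MsuppM.
Qed.

Lemma comp_exp c n (t : ps) k : Msupp c n t -> comp c (n * k)%N (t ^+ k) = (comp c n t) ^+ k.
Proof.
move=> H; elim: k=> [|k IH].
  rewrite muln0 !expr0; apply: funext=> e; rewrite /comp; case: eqP=> // He.
  rewrite -ps_oneE /ps_one; case: eqP=> // E; case: He; rewrite E /lin.
  by rewrite big1 // => i _; rewrite ffunE muln0.
by rewrite exprS mulnS compM ?IH ?exprS //; apply: MsuppX.
Qed.

Lemma key n k (r : ps) : (0 < k)%N -> In n r -> In (n * k)%N.+1 (r ^+ k) -> In n.+1 r.
Proof.
move=> k0 /In_char [t [Ht Frt]] Hrk.
have Frk : Fid (r ^+ k - t ^+ k).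
  rewrite subrXX; apply: (idlMr (@Fid_ideal K m a g)); exact: Frt.
have Htk : In (n * k)%N.+1 (t ^+ k).
  apply: (idl_eq (@In_ideal K m a b g _) Hrk).
  rewrite -opprB; apply: (idlN (@In_ideal K m a b g _)); exact: Fid_In.
case/In_char: Htk=> s [Hs /Fid_char [h Eh]].
set rho := comp cw n t.
have Erho : rho ^+ k = comp cw (n * k)%N (h * f).
  rewrite -comp_exp // -Eh compB (comp_Msupp Hs) subr0 //.
have [w' [H' EH]] : exists w' H', rho ^+ k = comp cw w' H' * P0.
  case: (leqP W (n * k)%N)=> nk.
    have Hhf : Msupp cw ((n * k - W) + W)%N (h * f).
      rewrite subnK // -Eh; apply: MsuppB=> //; first exact: MsuppX.
      exact: Msupp_le Hs.
    have Hh := min_weight f_Msupp f_comp Hhf.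
    exists (n * k - W)%N, h; rewrite Erho -f_comp -compM //; last exact: f_Msupp.
    by rewrite subnK.
  exists 0%N, 0; rewrite comp0 mul0r Erho comp_Msupp //.
  apply: (@Msupp_le K m.+1 cw W); [exact: nk | exact: MsuppMl f_Msupp].
have [q Eq] := P0_dvd EH.
apply/In_char.
case: (ltnP n W)=> nW.
  have rho0 : rho = 0.
    have Hr : Msupp cw n.+1 rho.
      rewrite /rho Eq; apply: (@Msupp_le K m.+1 cw W); [exact: nW | exact: MsuppMl P0_Msupp].
    rewrite -[rho](_ : comp cw n rho = rho); first exact: comp_Msupp.
    by apply: funext=> e; rewrite /rho /comp; case: ifP=> // ->.
  by exists t; split=> //; have := Msupp_sub_comp Ht; rewrite -/rho rho0 subr0.
have Hq : Msupp cw (n - W)%N q.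
  apply: (min_weight P0_Msupp P0_comp); rewrite subnK // -Eq; exact: Msupp_comp.
exists ((t - rho) + q * (g - gb)); split.
  apply: MsuppD; first exact: Msupp_sub_comp.
  by have := MsuppM Hq g_gb; rewrite addnS subnK.
have -> : r - (t - rho + q * (g - gb)) = (r - t) + q * f.
  by rewrite /rho Eq P0E; ring.
by apply: (idlD (@Fid_ideal K m a g)) => //; rewrite Fid_char; exists q.
Qed.

End Conc2.

Section Final.
Variables (K : fieldType) (m a b : nat) (g : ps K m.+1).
Hypothesis ha : (2 <= a)%N.
Hypothesis hab : (a <= b)%N.
Hypothesis haK : (a%:R : K) != 0.
Hypothesis hgy : forall e : mon m.+1, e ord0 != 0%N -> g e = 0.
Hypothesis hgb : ideal_pow (@Yid K m) b g.
Hypothesis hgb1 : ~ ideal_pow (@Yid K m) b.+1 g.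

Local Notation mon := (mon m.+1).
Local Notation ps := (ps K m.+1).
Local Notation A' := (a' a b).
Local Notation B' := (b' a b).
Local Notation In := (@In K m a b g).
Local Notation Fid := (@Fid K m a g).
Local Notation pmon := (@ps_mon K m.+1).
Local Notation W := (W a b).
Local Notation cw := (cw a b).
Local Notation Yid := (@Yid K m).
Local Notation x := (@xv K m).
Local Notation f := (@fA K m a g).

Local Notation Ii := (@In_ideal K m a b g).

Lemma gr_mulE (r s : nat -> ps) n :
  gr_mul r s n = \sum_(i <- iota 0 n.+1) r i * s (n - i)%N.
Proof. by rewrite /gr_mul ps_sumE big_map. Qed.

Lemma idl_sum_iota (P : ps -> Prop) n (F : nat -> ps) : is_ideal P ->
  (forall i, (i <= n)%N -> P (F i)) -> P (\sum_(i <- iota 0 n.+1) F i).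
Proof.
move=> HP H; rewrite big_seq; apply: (idl_sum HP)=> i; rewrite mem_iota=> /andP[_].
by rewrite add0n ltnS; apply: H.
Qed.

Lemma InM' i j k (u v : ps) : (k <= i + j)%N -> In i u -> In j v -> In k (u * v).
Proof. move=> H Hu Hv; apply: (In_mono H); exact: InM. Qed.

Lemma gr_mul_In (r s : nat -> ps) : (forall n, In n (r n)) -> (forall n, In n (s n)) ->
  forall n, In n (gr_mul r s n).
Proof.
move=> Hr Hs n; rewrite gr_mulE; apply: idl_sum_iota=> [|i iN]; first exact: Ii.
apply: (@InM' i (n - i)%N); [lia | exact: Hr | exact: Hs].
Qed.

Lemma gr_powS (r : nat -> ps) k : gr_pow r k.+2 = gr_mul r (gr_pow r k.+1).
Proof. by []. Qed.

Lemma gr_pow_In (r : nat -> ps) : (forall n, In n (r n)) -> forall k n, In n (gr_pow r k.+1 n).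
Proof.
move=> Hr; elim=> [|k IH] n; first exact: Hr.
by rewrite gr_powS; apply: gr_mul_In.
Qed.

Lemma gr_claim (r : nat -> ps) n0 : (forall n, In n (r n)) ->
  (forall i, (i < n0)%N -> In i.+1 (r i)) ->
  forall j, (forall N, (N < n0 * j.+1)%N -> In N.+1 (gr_pow r j.+1 N)) /\
            In (n0 * j.+1)%N.+1 (gr_pow r j.+1 (n0 * j.+1)%N - r n0 ^+ j.+1).
Proof.
move=> Hr IH; elim=> [|j [IH1 IH2]].
  split; first by move=> N; rewrite muln1; apply: IH.
  by rewrite muln1 /gr_pow /= expr1 subrr; apply: (idl0 (Ii _)).
have Hgp := gr_pow_In Hr j.
have Hterm : forall N i, (i <= N)%N -> (N <= n0 * j.+2)%N -> i != n0 ->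
    In N.+1 (r i * gr_pow r j.+1 (N - i)%N).
  move=> N i iN Nlt ne; case: (ltnP i n0)=> ilt.
    apply: (@InM' i.+1 (N - i)%N); [lia | exact: IH | exact: Hgp].
  apply: (@InM' i (N - i).+1); [lia | exact: Hr | apply: IH1].
  have : (n0 < i)%N by rewrite ltn_neqAle eq_sym ne.
  rewrite mulnS in Nlt; lia.
split.
  move=> N Nlt; rewrite gr_powS gr_mulE; apply: idl_sum_iota=> [|i iN]; first exact: Ii.
  case: (eqVneq i n0)=> [->|ne]; last by apply: Hterm=> //; apply: ltnW.
  apply: (@InM' n0 (N - n0).+1); [lia | exact: Hr | apply: IH1].
  rewrite mulnS in Nlt; lia.
set N := (n0 * j.+2)%N.
have n0N : (n0 <= N)%N by rewrite /N mulnS leq_addr.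
have EN : (N - n0)%N = (n0 * j.+1)%N by rewrite /N mulnS addKn.
rewrite gr_powS gr_mulE (bigD1_seq n0) ?iota_uniq ?mem_iota ?add0n ?ltnS //.
have -> : forall u v w : ps, u + v - w = (u - w) + v by move=> u v w; ring.
apply: (idlD (Ii _)).
  rewrite EN exprS -mulrBr; apply: (@InM' n0 (n0 * j.+1)%N.+1)=> //.
    by rewrite /N mulnS addnS.
rewrite big_seq_cond; apply: (idl_sum (Ii _))=> i /andP[].
rewrite mem_iota add0n ltnS=> /andP[_ iN] ne; apply: Hterm=> //.
Qed.


Let key' := @key K m a b g ha hab haK hgy hgb hgb1.

Lemma part_a : gr_reduced In.
Proof.
move=> r Hr _ k k1 Hk n; elim/ltn_ind: n=> n0 IH.
have [_ H2] := gr_claim Hr IH k.-1.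
rewrite prednK // in H2.
apply: (key' k1); first exact: Hr.
apply: (idl_eq (Ii _) (Hk (n0 * k)%N)).
by rewrite -opprB; apply: (idlN (Ii _)).
Qed.


Lemma qpow_In n i c : qpow Fid (In n) i c -> In (n * i)%N c.
Proof.
apply: gen_min; first exact: Ii.
move=> y [Hy|Hy]; last exact: Fid_In.
move: Hy; apply: (@pow_sub K m.+1 (In n) In n).
- exact: Ii.
- exact: In0.
- by move=> k l u v; apply: InM.
by [].
Qed.

Lemma exists_j (r : ps) n : ~ In n r -> exists j, [/\ (j < n)%N, In j r & ~ In j.+1 r].
Proof.
elim: n=> [|n IH] H; first by case: H; apply: In0.
case: (pselect (In n r))=> Hn; first by exists n.
by have [j [jn Hj Hj1]] := IH Hn; exists j; split=> //; apply: ltnW.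
Qed.

Lemma part_b n (r : ps) : (1 <= n)%N -> qclosure Fid (In n) r <-> In n r.
Proof.
move=> n1; split; last first.
  move=> Hr; exists 1%N, (fun _ => - r); split=> //; split.
    move=> i /andP[i1 i2]; have -> : i = 1%N by lia.
    apply: gen_in; left; rewrite /=; apply: gen_in; exists 1, (- r); split=> //.
    by split; [apply: (idlN (Ii _)) | rewrite ps_mulE mul1r].
  rewrite ps_addE ps_expE ps_sumE big_map (_ : iota 1 1 = [:: 1%N]) // big_seq1 ps_mulE ps_expE subnn.
  by rewrite expr1 expr0 mulr1 subrr; apply: ig_zero.
case=> k [c [k1 [Hc Heq]]].
case: (pselect (In n r))=> // nIn; exfalso.
have [j [jn Hj Hj1]] := exists_j nIn.
apply: Hj1; apply: (key' k1 Hj).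
set S := ps_sum _ in Heq.
have HS : In (j * k)%N.+1 S.
  rewrite /S ps_sumE big_map big_seq; apply: (idl_sum (Ii _))=> i.
  rewrite mem_iota=> /andP[i1 i2].
  have ik : (i <= k)%N by lia.
  rewrite ps_mulE ps_expE; apply: (@InM' (n * i)%N (j * (k - i))%N).
  - have h1 : (j.+1 * i <= n * i)%N by rewrite leq_mul2r jn orbT.
    have h2 : (j * i + j * (k - i) = j * k)%N by rewrite -mulnDr subnKC.
    rewrite mulSn in h1; lia.
  - by apply: qpow_In; apply: Hc; rewrite i1.
  - exact: InX.
have H1 : In (j * k)%N.+1 (r ^+ k + S) by rewrite -ps_expE -ps_addE; apply: Fid_In.
apply: (idl_eq (Ii _) H1).
have -> : forall u v : ps, u - (u + v) = - v by move=> u v; ring.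
exact: (idlN (Ii _)).
Qed.


Local Notation Jn := (@Jn K m a b g).
Local Notation Qp := (@Qp K m a g).

Lemma nkE k : nk a b k = (k * B' %/ A')%N.
Proof.
by rewrite /nk -(@divnMr (gcdn a b) (k * B')%N A' (d_gt0 ha hab)) -mulnA -(bE a b) -(aE a b).
Qed.

Lemma Yid_In : forall y, Yid y -> In A' y.
Proof.
apply: gen_min; first exact: Ii.
move=> y [i ->]; rewrite yvE; apply: mon_In.
by rewrite lin_dy /cw eq_sym (negbTE (neq_lift _ _)).
Qed.

Lemma Qp_In j q : Qp j q -> In (j * A')%N q.
Proof.
apply: gen_min; first exact: Ii.
move=> y [Hy|Hy]; last exact: Fid_In.
rewrite mulnC; move: Hy; apply: (@pow_sub K m.+1 Yid In A').
- exact: Ii.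
- exact: In0.
- by move=> k l u v; apply: InM.
exact: Yid_In.
Qed.

Lemma Jn_In n r : Jn n r -> In (n * A')%N r.
Proof.
move: r; apply: gen_min; first exact: Ii.
move=> y [Fy|[Qy|[k [q [kk [Qq ->]]]]]].
- exact: Fid_In.
- exact: Qp_In.
rewrite ps_mulE ps_expE xvX.
apply: (@InM' (k * B')%N ((n - nk a b k) * A')%N).
- rewrite nkE mulnBl; have := leq_trunc_div (k * B') A'; lia.
- by apply: mon_In; rewrite lin_dx /cw eqxx mulnC.
exact: Qp_In.
Qed.

Lemma Jn_ideal n : is_ideal (Jn n). Proof. exact: gen_ideal. Qed.
Lemma Fid_Jn n r : Fid r -> Jn n r. Proof. by move=> H; apply: gen_in; left. Qed.

Lemma pow_g q : ideal_pow Yid (b * q)%N (g ^+ q).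
Proof.
elim: q=> [|q IH]; first by rewrite muln0.
by rewrite exprS mulnS; apply: pow_mul.
Qed.

Lemma In_Jn n r : In (n * A')%N r -> Jn n r.
Proof.
move: r; apply: gen_min; first exact: Jn_ideal.
move=> y [Fy|[e [He ->]]]; first exact: Fid_Jn.
set e0 := e ord0.
pose ey : mon := [ffun i => if i == ord0 then 0%N else e i].
have Ee : e = madd (dx m e0) ey.
  by apply: mon_eq=> i; rewrite !ffunE; case: eqP=> [->|]; rewrite ?addn0.
set q := (e0 %/ a)%N; set j := (e0 %% a)%N.
have Ee0 : e0 = (q * a + j)%N by apply: divn_eq.
set al := (\sum_(i < m) e (lift ord0 i))%N.
have lin_ey : lin (@cy m) ey = al.
  rewrite lin_cy /al; apply: eq_bigr=> i _; rewrite ffunE.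
  by rewrite eq_sym (negbTE (neq_lift _ _)).
set Y := pmon ey.
have Ex : pmon e = x ^+ j * (g ^+ q * Y) + x ^+ j * Y * ((x ^+ a) ^+ q - g ^+ q).
  rewrite Ee -mon_mul -xvX Ee0 exprD mulnC exprM; rewrite -/Y; move: (x ^+ a ^+ q) (x ^+ j) (g ^+ q) Y=> u1 v1 w1 y1; ring.
rewrite Ex; apply: (idlD (Jn_ideal n)); last first.
  apply: Fid_Jn; apply: (idlM (@Fid_ideal K m a g)).
  rewrite subrXX; apply: (idlMr (@Fid_ideal K m a g)); rewrite -fAE; apply: gen_in.
  by [].
have HY : ideal_pow Yid (b * q + al)%N (g ^+ q * Y).
  by apply: pow_mul; [exact: pow_g | exact: (ymon_pow ha hab haK lin_ey)].
have Hw : (n * A' <= (b * q + al) * A' + j * B')%N.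
  move: He; rewrite -/e0 Ee0 mulnDl mulnDl -mulnA [(a * B')%N](_ : _ = W) //.
  rewrite (WE ha hab) mulnA [(q * b)%N]mulnC; lia.
case: (posnP j)=> j0.
  have Hn : (n <= b * q + al)%N.
    by rewrite -(leq_pmul2r (A'_gt0 ha hab)); move: Hw; rewrite j0 mul0n addn0.
  rewrite j0 expr0 mul1r; apply: gen_in; right; left.
  by apply: gen_in; left; apply: (pow_mono Hn).
apply: gen_in; right; right; exists j, (g ^+ q * Y); split.
  rewrite j0 /=; have := ltn_pmod e0 (ltnW ha); rewrite -/j; lia.
split; last by rewrite ps_mulE ps_expE.
apply: gen_in; left; apply: pow_mono HY.
have : (n - (b * q + al) <= nk a b j)%N.
  rewrite nkE leq_divRL ?(A'_gt0 ha hab) // mulnBl; lia.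
lia.
Qed.

Lemma Jn_eq n : Jn n = In (n * A')%N.
Proof. by apply: funext=> r; apply: propext; split; [apply: Jn_In | apply: In_Jn]. Qed.

Lemma part_c n (r : ps) : (1 <= n)%N -> qclosure Fid (Jn n) r <-> Jn n r.
Proof.
move=> n1; rewrite Jn_eq; apply: part_b.
by rewrite muln_gt0 n1 (A'_gt0 ha hab).
Qed.

End Final.

Theorem proposition5p4 (K : closedFieldType) (m a b : nat) (g : ps K m.+1)
  (hm : (1 <= m)%N) (ha : (2 <= a)%N) (hab : (a <= b)%N)
  (haK : (a%:R : K) != 0)
  (hgy : forall e : mon m.+1, e ord0 != 0%N -> g e = 0)
  (hgb : ideal_pow (@Yid K m) b g) (hgb1 : ~ ideal_pow (@Yid K m) b.+1 g) :
  gr_reduced (@In K m a b g)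
  /\ (forall n, (1 <= n)%N -> forall r,
        @qclosure K m.+1 (@Fid K m a g) (@In K m a b g n) r <-> @In K m a b g n r)
  /\ (forall n, (1 <= n)%N -> forall r,
        @qclosure K m.+1 (@Fid K m a g) (@Jn K m a b g n) r <-> @Jn K m a b g n r).
Proof.
split; first exact: (part_a ha hab haK hgy hgb hgb1).
split=> n n1 r; first exact: (part_b ha hab haK hgy hgb hgb1).
exact: (part_c ha hab haK hgy hgb hgb1).
Qed.
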